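(* Let $p=(p_1,\dots,p_n)$ be pairwise distinct points of $Q$ with $M_{W_i}>0$ for all $i$, and let $p'=(p_1',\dots,p_n')$ be obtained from one step of the higher order Lloyd algorithm, i.e. $p_i'=C_{W_i}$ for each $i$, where $W_i$, $C_{W_i}$ are computed from the order-2 Voronoi partition generated by $p$. Then $\mathcal H(p')\le\mathcal H(p)$, and the inequality is strict unless $p_i=C_{W_i}$ for every $i$.
   Context: $Q\subset\mathbb{R}^2$ is a compact convex polygon, $\phi:Q\to[0,\infty)$ a $C^2$ density, $n\ge3$, $C=\{(a,b):1\le a<b\le n\}$, and $\mathcal H(p_1,\dots,p_n)=\int_Q\min_{(a,b)\in C}\tfrac12(\|q-p_a\|^2+\|q-p_b\|^2)\phi(q)dq$. For $i\ne j$, $V_{\mathcal T_{ij}}=\{q\in Q:\|q-p_v\|\le\|q-p_w\|\ \forall v\in\{i,j\},\ w\notin\{i,j\}\}$ is the order-2 Voronoi cell generated by $\{p_i,p_j\}$; $\mathcal P_i$ is the set of generating pairs containing $i$; $M_V=\int_V\phi$, $C_V=\frac1{M_V}\int_Vq\phi(q)dq$; $W_i=\bigcup_{\mathcal T_{ij}\in\mathcal P_i}V_{\mathcal T_{ij}}$, $M_{W_i}=\sum_{\mathcal T_{ij}\in\mathcal P_i}M_{V_{\mathcal T_{ij}}}$, $C_{W_i}=\frac1{M_{W_i}}\sum_{\mathcal T_{ij}\in\mathcal P_i}M_{V_{\mathcal T_{ij}}}C_{V_{\mathcal T_{ij}}}$. *)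

(* Defs.v *)
From Stdlib Require Import Reals Lra List ClassicalEpsilon.
Import ListNotations.
Open Scope R_scope.

Definition pt := (R * R)%type.

Definition dist (a b : pt) : R :=
  sqrt ((fst a - fst b)^2 + (snd a - snd b)^2).

Definition ind (P : Prop) : R :=
  if excluded_middle_informative P then 1 else 0.

(** Total one-dimensional Riemann integral: the value of RiemannInt when
    f is Riemann integrable on [a,b] (an arbitrary real otherwise). *)
Definition RInt (f : R -> R) (a b : R) : R :=
  epsilon (inhabits 0)
    (fun I => exists pr : Riemann_integrable f a b, RiemannInt pr = I).

Definition Int2 (x0 x1 y0 y1 : R) (f : pt -> R) : R :=
  RInt (fun x => RInt (fun y => f (x, y)) y0 y1) x0 x1.

(** A convex polygon given as a finite intersection of closed half-planes
    a*x + b*y <= c, encoded by triples ((a,b),c). *)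
Definition inQ (Q : list (R * R * R)) (q : pt) : Prop :=
  Forall (fun h => let '(a, b, c) := h in a * fst q + b * snd q <= c) Q.

Definition inBox (x0 x1 y0 y1 : R) (q : pt) : Prop :=
  x0 <= fst q <= x1 /\ y0 <= snd q <= y1.

Definition cont2 (f : pt -> R) : Prop :=
  forall p eps, 0 < eps -> exists delta, 0 < delta /\
    forall q, dist q p < delta -> Rabs (f q - f p) < eps.

Definition C1_2 (f : pt -> R) : Prop :=
  exists fx fy : pt -> R,
    (forall p, derivable_pt_lim (fun t => f (t, snd p)) (fst p) (fx p)) /\
    (forall p, derivable_pt_lim (fun t => f (fst p, t)) (snd p) (fy p)) /\
    cont2 f /\ cont2 fx /\ cont2 fy.

Definition C2_2 (f : pt -> R) : Prop :=
  exists fx fy : pt -> R,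
    (forall p, derivable_pt_lim (fun t => f (t, snd p)) (fst p) (fx p)) /\
    (forall p, derivable_pt_lim (fun t => f (fst p, t)) (snd p) (fy p)) /\
    C1_2 fx /\ C1_2 fy.

Definition sumR (l : list R) : R := fold_right Rplus 0 l.
Definition minR (l : list R) : R :=
  match l with nil => 0 | x :: t => fold_right Rmin x t end.

(** C = {(a,b) : 0 <= a < b < n}  (0-based indices) *)
Definition pairs (n : nat) : list (nat * nat) :=
  flat_map (fun b => map (fun a => (a, b)) (seq 0 b)) (seq 0 n).

Definition Hcost (x0 x1 y0 y1 : R) (Q : list (R*R*R)) (phi : pt -> R)
    (n : nat) (p : nat -> pt) : R :=
  Int2 x0 x1 y0 y1 (fun q =>
    ind (inQ Q q) *
    (minR (map (fun ab => / 2 * ((dist q (p (fst ab)))^2 + (dist q (p (snd ab)))^2))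
               (pairs n)) * phi q)).

Definition inV (Q : list (R*R*R)) (n : nat) (p : nat -> pt) (i j : nat) (q : pt) : Prop :=
  inQ Q q /\
  forall v w, (v = i \/ v = j) -> (w < n)%nat -> w <> i -> w <> j ->
    dist q (p v) <= dist q (p w).

Definition genPair (Q : list (R*R*R)) (n : nat) (p : nat -> pt) (i j : nat) : Prop :=
  i <> j /\ (i < n)%nat /\ (j < n)%nat /\ exists q, inV Q n p i j q.

Section Cells.
Variables (x0 x1 y0 y1 : R) (Q : list (R*R*R)) (phi : pt -> R) (n : nat) (p : nat -> pt).

Definition MV (i j : nat) : R :=
  Int2 x0 x1 y0 y1 (fun q => ind (inV Q n p i j q) * phi q).
Definition CVx (i j : nat) : R :=
  / MV i j * Int2 x0 x1 y0 y1 (fun q => ind (inV Q n p i j q) * (fst q * phi q)).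
Definition CVy (i j : nat) : R :=
  / MV i j * Int2 x0 x1 y0 y1 (fun q => ind (inV Q n p i j q) * (snd q * phi q)).

Definition MW (i : nat) : R :=
  sumR (map (fun j => ind (genPair Q n p i j) * MV i j) (seq 0 n)).
Definition CW (i : nat) : pt :=
  ( / MW i * sumR (map (fun j => ind (genPair Q n p i j) * (MV i j * CVx i j)) (seq 0 n)),
    / MW i * sumR (map (fun j => ind (genPair Q n p i j) * (MV i j * CVy i j)) (seq 0 n)) ).
End Cells.

(* Main.v *)
Require Import Defs.
From Stdlib Require Import Reals Lra Lia List ClassicalEpsilon FunctionalExtensionality.
From Coquelicot Require Import Coquelicot.
Import ListNotations.
Import Defs.
Notation CRInt := Coquelicot.RInt.RInt.
Open Scope R_scope.

Lemma RInt_Defs : forall f a b, ex_RInt f a b -> Defs.RInt f a b = CRInt f a b.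
Proof.
intros f a b H. unfold Defs.RInt.
assert (H0 := ex_RInt_Reals_0 _ _ _ H).
destruct (epsilon_spec (inhabits 0) (fun I => exists pr : Riemann_integrable f a b, RiemannInt pr = I)) as [pr Hpr].
- exists (RiemannInt H0); exists H0; auto.
- rewrite <- Hpr. symmetry. apply RInt_Reals.
Qed.

Lemma ind_ext (P P' : Prop) : (P <-> P') -> ind P = ind P'.
Proof. intros H; unfold ind; destruct (excluded_middle_informative P); destruct (excluded_middle_informative P'); tauto. Qed.
Lemma ind_T (P : Prop) : P -> ind P = 1.
Proof. intros H; unfold ind; destruct (excluded_middle_informative P); tauto. Qed.
Lemma ind_F (P : Prop) : ~P -> ind P = 0.
Proof. intros H; unfold ind; destruct (excluded_middle_informative P); tauto. Qed.
Lemma ind_01 (P : Prop) : ind P = 0 \/ ind P = 1.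
Proof. unfold ind; destruct (excluded_middle_informative P); auto. Qed.
Lemma ind_ge0 (P : Prop) : 0 <= ind P.
Proof. destruct (ind_01 P) as [-> | ->]; lra. Qed.

Lemma ex_RInt_split2 (f1 f2 h : R -> R) a c b : a <= c <= b ->
  ex_RInt f1 a c -> ex_RInt f2 c b ->
  (forall t, a < t < c -> h t = f1 t) -> (forall t, c < t < b -> h t = f2 t) -> ex_RInt h a b.
Proof.
intros Hc H1 H2 E1 E2. apply ex_RInt_Chasles with c.
- apply ex_RInt_ext with f1; auto. intros t Ht. rewrite Rmin_left in Ht by lra. rewrite Rmax_right in Ht by lra. symmetry; auto.
- apply ex_RInt_ext with f2; auto. intros t Ht. rewrite Rmin_left in Ht by lra. rewrite Rmax_right in Ht by lra. symmetry; auto.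
Qed.

Lemma ex_RInt_zero a b : ex_RInt (fun _ => 0) a b.
Proof. apply (ex_RInt_const a b (0:R)). Qed.


Lemma div_neg_le al be t : al < 0 -> al * t <= be -> be / al <= t.
Proof. intros. apply Rmult_le_reg_l with (-al); [lra|].
replace (-al*(be/al)) with (-be) by (field; lra). lra. Qed.
Lemma div_neg_lt al be t : al < 0 -> be / al < t -> al * t <= be.
Proof. intros H1 H2. assert (-al * (be/al) < -al * t) by (apply Rmult_lt_compat_l; lra).
replace (-al*(be/al)) with (-be) in H by (field; lra). lra. Qed.
Lemma div_pos_le al be t : 0 < al -> al * t <= be -> t <= be / al.
Proof. intros. apply Rmult_le_reg_l with (al); [lra|].
replace (al*(be/al)) with (be) by (field; lra). lra. Qed.
Lemma div_pos_lt al be t : 0 < al -> t < be / al -> al * t <= be.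
Proof. intros H1 H2. assert (al * t < al * (be/al)) by (apply Rmult_lt_compat_l; lra).
replace (al*(be/al)) with (be) in H by (field; lra). lra. Qed.

Lemma ex_RInt_ind_lin (f : R -> R) a b al be : a <= b -> ex_RInt f a b ->
  ex_RInt (fun t => ind (al * t <= be) * f t) a b.
Proof.
intros Hab Hf.
destruct (Rtotal_order al 0) as [Hn | [Hz | Hp]].
- set (c := Rmax a (Rmin b (be/al))).
  assert (Hc : a <= c <= b) by (unfold c; split; [apply Rmax_l | apply Rmax_lub; [lra | apply Rmin_l]]).
  apply ex_RInt_split2 with (fun _ => 0) f c; auto.
  + apply ex_RInt_zero.
  + apply (@ex_RInt_Chasles_2 R_CompleteNormedModule f a c b); auto.
  + intros t Ht. rewrite ind_F; [lra|]. intros Hc'.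
    assert (be / al <= t).
    { apply div_neg_le; auto. }
    unfold c, Rmax, Rmin in Ht; repeat destruct Rle_dec; lra.
  + intros t Ht. rewrite ind_T; [lra|].
    assert (be / al < t).
    { unfold c, Rmax, Rmin in Ht; repeat destruct Rle_dec; lra. }
    apply div_neg_lt; auto.
- subst al. destruct (Rle_dec (0 * 0) be) as [H|H].
  + apply (@ex_RInt_ext R_NormedModule f); auto. intros t _. rewrite ind_T; [rewrite Rmult_1_l; reflexivity | lra].
  + apply (@ex_RInt_ext R_NormedModule (fun _ => 0)); [| apply ex_RInt_zero]. intros t _. rewrite ind_F; [rewrite Rmult_0_l; reflexivity | lra].
- set (c := Rmax a (Rmin b (be/al))).
  assert (Hc : a <= c <= b) by (unfold c; split; [apply Rmax_l | apply Rmax_lub; [lra | apply Rmin_l]]).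
  apply ex_RInt_split2 with f (fun _ => 0) c; auto.
  + apply (@ex_RInt_Chasles_1 R_CompleteNormedModule f a c b); auto.
  + apply ex_RInt_zero.
  + intros t Ht. rewrite ind_T; [lra|].
    assert (t < be / al).
    { unfold c, Rmax, Rmin in Ht; repeat destruct Rle_dec; lra. }
    apply div_pos_lt; auto.
  + intros t Ht. rewrite ind_F; [lra|]. intros Hc'.
    assert (t <= be / al).
    { apply div_pos_le; auto. }
    unfold c, Rmax, Rmin in Ht; repeat destruct Rle_dec; lra.
Qed.

Lemma is_RInt_finite_zero (f : R -> R) (L : list R) : forall a b, a <= b ->
  (forall t, a < t < b -> ~ In t L -> f t = 0) -> is_RInt f a b 0.
Proof.
induction L as [|c L IH]; intros a b Hab Hf.
- apply is_RInt_ext with (fun _ => 0).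
  + intros t Ht. rewrite Rmin_left in Ht by lra. rewrite Rmax_right in Ht by lra. symmetry; apply Hf; auto.
  + pose proof (@is_RInt_const R_NormedModule a b 0) as H. replace (scal (b - a) (0:R_NormedModule)) with (zero : R_NormedModule) in H. exact H. symmetry. exact (Rmult_0_r (b - a)).
- destruct (Rlt_dec a c) as [H1|H1]; [destruct (Rlt_dec c b) as [H2|H2]|].
  + assert (Hc1 : is_RInt f a c 0).
    { apply IH; [lra|]. intros t Ht Hn. apply Hf; [lra|]. intros [E|E]; [lra|auto]. }
    assert (Hc2 : is_RInt f c b 0).
    { apply IH; [lra|]. intros t Ht Hn. apply Hf; [lra|]. intros [E|E]; [lra|auto]. }
    pose proof (is_RInt_Chasles f a c b _ _ Hc1 Hc2) as HH.
    replace (plus (0:R_NormedModule) 0) with (0:R_NormedModule) in HH. exact HH.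
    symmetry; exact (Rplus_0_r 0).
  + apply IH; auto. intros t Ht Hn. apply Hf; auto. intros [E|E]; [lra|auto].
  + apply IH; auto. intros t Ht Hn. apply Hf; auto. intros [E|E]; [lra|auto].
Qed.

Lemma ex_RInt_plusR (f g : R -> R) a b : ex_RInt f a b -> ex_RInt g a b -> ex_RInt (fun t => f t + g t) a b.
Proof. intros. exact (@ex_RInt_plus R_NormedModule f g a b H H0). Qed.
Lemma RInt_plusR (f g : R -> R) a b : ex_RInt f a b -> ex_RInt g a b -> CRInt (fun t => f t + g t) a b = CRInt f a b + CRInt g a b.
Proof. intros. exact (@RInt_plus R_CompleteNormedModule f g a b H H0). Qed.
Lemma ex_RInt_scalR (f : R -> R) a b c : ex_RInt f a b -> ex_RInt (fun t => c * f t) a b.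
Proof. intros. exact (@ex_RInt_scal R_NormedModule f a b c H). Qed.
Lemma RInt_scalR (f : R -> R) a b c : ex_RInt f a b -> CRInt (fun t => c * f t) a b = c * CRInt f a b.
Proof. intros. exact (@RInt_scal R_CompleteNormedModule f a b c H). Qed.

Section Box.
Variables x0 x1 y0 y1 : R.

Definition Good (f : pt -> R) := (forall x, ex_RInt (fun y => f (x,y)) y0 y1) /\
  ex_RInt (fun x => CRInt (fun y => f (x,y)) y0 y1) x0 x1.

Lemma Int2_eq f : Good f -> Int2 x0 x1 y0 y1 f = CRInt (fun x => CRInt (fun y => f (x,y)) y0 y1) x0 x1.
Proof.
intros [H1 H2]. unfold Int2.
replace (fun x => Defs.RInt (fun y => f (x, y)) y0 y1) with (fun x => CRInt (fun y => f (x,y)) y0 y1).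
- apply RInt_Defs; auto.
- apply functional_extensionality; intros x. symmetry; apply RInt_Defs; auto.
Qed.

Lemma Good_plus f g : Good f -> Good g -> Good (fun q => f q + g q) /\
  Int2 x0 x1 y0 y1 (fun q => f q + g q) = Int2 x0 x1 y0 y1 f + Int2 x0 x1 y0 y1 g.
Proof.
intros Hf Hg.
assert (E : forall x, CRInt (fun y => f (x,y) + g (x,y)) y0 y1 = CRInt (fun y => f (x,y)) y0 y1 + CRInt (fun y => g (x,y)) y0 y1).
{ intros x. apply RInt_plusR; [apply Hf | apply Hg]. }
assert (G : Good (fun q => f q + g q)).
{ split. intros x. apply ex_RInt_plusR; [apply Hf | apply Hg].
  replace (fun x => CRInt (fun y => f (x,y) + g (x,y)) y0 y1) with
   (fun x => CRInt (fun y => f (x,y)) y0 y1 + CRInt (fun y => g (x,y)) y0 y1).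
  apply ex_RInt_plusR; [apply Hf | apply Hg].
  apply functional_extensionality; intros x; auto. }
split; auto.
rewrite !Int2_eq; auto.
replace (fun x => CRInt (fun y => f (x,y) + g (x,y)) y0 y1) with
   (fun x => CRInt (fun y => f (x,y)) y0 y1 + CRInt (fun y => g (x,y)) y0 y1).
apply RInt_plusR; [apply Hf | apply Hg].
apply functional_extensionality; intros x; auto.
Qed.

Lemma Good_scal c f : Good f -> Good (fun q => c * f q) /\
  Int2 x0 x1 y0 y1 (fun q => c * f q) = c * Int2 x0 x1 y0 y1 f.
Proof.
intros Hf.
assert (E : forall x, CRInt (fun y => c * f (x,y)) y0 y1 = c * CRInt (fun y => f (x,y)) y0 y1).
{ intros x. apply RInt_scalR; apply Hf. }
assert (G : Good (fun q => c * f q)).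
{ split. intros x. apply ex_RInt_scalR; apply Hf.
  replace (fun x => CRInt (fun y => c * f (x,y)) y0 y1) with
   (fun x => c * CRInt (fun y => f (x,y)) y0 y1).
  apply ex_RInt_scalR; apply Hf.
  apply functional_extensionality; intros x; auto. }
split; auto.
rewrite !Int2_eq; auto.
replace (fun x => CRInt (fun y => c * f (x,y)) y0 y1) with
   (fun x => c * CRInt (fun y => f (x,y)) y0 y1).
apply RInt_scalR; apply Hf.
apply functional_extensionality; intros x; auto.
Qed.


End Box.

Lemma RInt_zeroR a b : CRInt (fun _ => 0) a b = 0.
Proof. rewrite (@RInt_const R_CompleteNormedModule). exact (Rmult_0_r (b - a)). Qed.

Section Box2.
Variables x0 x1 y0 y1 : R.

Lemma Good_zero : Good x0 x1 y0 y1 (fun _ => 0) /\ Int2 x0 x1 y0 y1 (fun _ => 0) = 0.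
Proof.
assert (G : Good x0 x1 y0 y1 (fun _ => 0)).
{ split. intros; apply ex_RInt_zero.
  replace (fun x : R => CRInt (fun _ : R => 0) y0 y1) with (fun x : R => 0).
  apply ex_RInt_zero. apply functional_extensionality; intros; rewrite RInt_zeroR; auto. }
split; auto. rewrite Int2_eq; auto.
replace (fun x : R => CRInt (fun _ : R => 0) y0 y1) with (fun x : R => 0).
apply RInt_zeroR. apply functional_extensionality; intros; rewrite RInt_zeroR; auto.
Qed.

Lemma Good_sum (l : list nat) (F : nat -> pt -> R) :
  (forall k, In k l -> Good x0 x1 y0 y1 (F k)) ->
  Good x0 x1 y0 y1 (fun q => sumR (map (fun k => F k q) l)) /\
  Int2 x0 x1 y0 y1 (fun q => sumR (map (fun k => F k q) l)) = sumR (map (fun k => Int2 x0 x1 y0 y1 (F k)) l).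
Proof.
induction l as [|k l IH]; intros H; simpl.
- apply Good_zero.
- destruct IH as [G E]. intros; apply H; simpl; auto.
  destruct (Good_plus x0 x1 y0 y1 (F k) (fun q => sumR (map (fun k => F k q) l))) as [G2 E2]; auto.
  apply H; simpl; auto.
  split; auto. rewrite E2, E; auto.
Qed.

Lemma Good_ext f g : (forall q, f q = g q) -> Good x0 x1 y0 y1 f -> Good x0 x1 y0 y1 g /\ Int2 x0 x1 y0 y1 f = Int2 x0 x1 y0 y1 g.
Proof. intros E H. replace g with f. auto. apply functional_extensionality; auto. Qed.

Lemma Int2_le f g : x0 <= x1 -> y0 <= y1 -> Good x0 x1 y0 y1 f -> Good x0 x1 y0 y1 g ->
  (forall q, f q <= g q) -> Int2 x0 x1 y0 y1 f <= Int2 x0 x1 y0 y1 g.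
Proof.
intros Hx Hy Hf Hg H. rewrite !Int2_eq; auto.
apply RInt_le; auto. apply Hf. apply Hg.
intros x _. apply RInt_le; auto. apply Hf. apply Hg.
Qed.

End Box2.

Definition Ct (f : R -> R) := forall x eps, 0 < eps -> exists d, 0 < d /\
  forall x', Rabs (x' - x) < d -> Rabs (f x' - f x) < eps.

Lemma Ct_continuous f : Ct f -> forall x, continuous f x.
Proof.
intros H x. apply continuity_pt_filterlim.
intros eps Heps. destruct (H x eps Heps) as [d [Hd Hd']].
exists d; split; auto. intros x' [_ Hx']. simpl in *. unfold R_dist in *. apply Hd'; auto.
Qed.

Lemma Ct_pt f x : Ct f -> continuity_pt f x.
Proof. intros H. apply continuity_pt_filterlim. apply Ct_continuous; auto. Qed.

Lemma Ct_const c : Ct (fun _ => c).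
Proof. intros x eps He. exists 1; split; [lra|]. intros. rewrite Rminus_diag, Rabs_R0; auto. Qed.

Lemma Ct_lin c a k : Ct (fun x => (c - a * x) * k).
Proof.
intros x eps He. exists (eps / (Rabs (a*k) + 1)). split.
apply Rdiv_lt_0_compat; [lra|]. pose proof (Rabs_pos (a*k)); lra.
intros x' Hx'.
replace ((c - a * x') * k - (c - a * x) * k) with (- (a*k) * (x' - x)) by ring.
rewrite Rabs_mult, Rabs_Ropp. pose proof (Rabs_pos (a*k)). pose proof (Rabs_pos (x'-x)).
apply Rle_lt_trans with ((Rabs (a*k) + 1) * Rabs (x' - x)). nra.
apply Rmult_lt_reg_l with (/ (Rabs (a*k) + 1)). apply Rinv_0_lt_compat; lra.
rewrite <- Rmult_assoc, Rinv_l, Rmult_1_l by lra. rewrite Rmult_comm. exact Hx'.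
Qed.

Lemma Rmax_lip a b a' b' e : Rabs (a' - a) < e -> Rabs (b' - b) < e -> Rabs (Rmax a' b' - Rmax a b) < e.
Proof. intros H1 H2. apply Rabs_def2 in H1; apply Rabs_def2 in H2. unfold Rmax; repeat destruct Rle_dec; apply Rabs_def1; lra. Qed.
Lemma Rmin_lip a b a' b' e : Rabs (a' - a) < e -> Rabs (b' - b) < e -> Rabs (Rmin a' b' - Rmin a b) < e.
Proof. intros H1 H2. apply Rabs_def2 in H1; apply Rabs_def2 in H2. unfold Rmin; repeat destruct Rle_dec; apply Rabs_def1; lra. Qed.

Lemma Ct_max f g : Ct f -> Ct g -> Ct (fun x => Rmax (f x) (g x)).
Proof.
intros Hf Hg x eps He. destruct (Hf x eps He) as [d1 [H1 H1']]. destruct (Hg x eps He) as [d2 [H2 H2']].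
exists (Rmin d1 d2); split. apply Rmin_glb_lt; auto.
intros x' Hx'. apply Rmax_lip; [apply H1' | apply H2']; eapply Rlt_le_trans; eauto; [apply Rmin_l | apply Rmin_r].
Qed.
Lemma Ct_min f g : Ct f -> Ct g -> Ct (fun x => Rmin (f x) (g x)).
Proof.
intros Hf Hg x eps He. destruct (Hf x eps He) as [d1 [H1 H1']]. destruct (Hg x eps He) as [d2 [H2 H2']].
exists (Rmin d1 d2); split. apply Rmin_glb_lt; auto.
intros x' Hx'. apply Rmin_lip; [apply H1' | apply H2']; eapply Rlt_le_trans; eauto; [apply Rmin_l | apply Rmin_r].
Qed.

Definition Cont (g : pt -> R) := forall x y, continuity_2d_pt (fun u v => g (u,v)) x y.

Lemma Cont_slice g x : Cont g -> Ct (fun t => g (x,t)).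
Proof.
intros H y eps He. destruct (H x y (mkposreal eps He)) as [d Hd].
exists d; split. apply cond_pos. intros y' Hy'. apply (Hd x y'); auto. rewrite Rminus_diag, Rabs_R0; apply cond_pos.
Qed.

Lemma Ct_abs f : Ct f -> Ct (fun x => Rabs (f x)).
Proof.
intros H x eps He. destruct (H x eps He) as [d [Hd Hd']]. exists d; split; auto.
intros. eapply Rle_lt_trans. apply Rabs_triang_inv2. auto.
Qed.

Lemma ex_RInt_Ct f a b : Ct f -> ex_RInt f a b.
Proof. intros H. apply (@ex_RInt_continuous R_CompleteNormedModule). intros; apply Ct_continuous; auto. Qed.

Lemma abs_RInt_gen (f : R -> R) a b M : ex_RInt f a b ->
  (forall t, Rmin a b <= t <= Rmax a b -> Rabs (f t) <= M) -> Rabs (CRInt f a b) <= Rabs (b - a) * M.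
Proof.
intros Hf HM. destruct (Rle_dec a b) as [Hab|Hab].
- rewrite (Rabs_right (b - a)) by lra. apply abs_RInt_le_const; auto.
  intros t Ht; apply HM. rewrite Rmin_left, Rmax_right; lra.
- rewrite <- (@opp_RInt_swap R_CompleteNormedModule) by (apply (@ex_RInt_swap R_NormedModule); auto).
  change (Rabs (- CRInt f b a) <= Rabs (b - a) * M). rewrite Rabs_Ropp.
  rewrite (Rabs_left (b - a)) by lra. replace (- (b - a)) with (a - b) by ring.
  apply abs_RInt_le_const. lra. apply (@ex_RInt_swap R_NormedModule); auto.
  intros t Ht; apply HM. rewrite Rmin_right, Rmax_left; lra.
Qed.

Lemma RInt_ChaslesR (f : R -> R) a b c : ex_RInt f a b -> ex_RInt f b c ->
  CRInt f a b + CRInt f b c = CRInt f a c.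
Proof. intros. exact (@RInt_Chasles R_CompleteNormedModule f a b c H H0). Qed.

Lemma RInt_minusR (f g : R -> R) a b : ex_RInt f a b -> ex_RInt g a b ->
  CRInt (fun t => f t - g t) a b = CRInt f a b - CRInt g a b.
Proof. intros. exact (@RInt_minus R_CompleteNormedModule f g a b H H0). Qed.
Lemma ex_RInt_minusR (f g : R -> R) a b : ex_RInt f a b -> ex_RInt g a b ->
  ex_RInt (fun t => f t - g t) a b.
Proof. intros. exact (@ex_RInt_minus R_NormedModule f g a b H H0). Qed.

Lemma param_cont (g : pt -> R) (A B : R -> R) y0 y1 : Cont g -> Ct A -> Ct B ->
  (forall x, y0 <= A x <= B x /\ B x <= y1) ->
  Ct (fun x => CRInt (fun y => g (x,y)) (A x) (B x)).
Proof.
intros Hg HA HB HAB x eps He.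
assert (exg : forall x a b, ex_RInt (fun y => g (x,y)) a b) by (intros; apply ex_RInt_Ct, Cont_slice; auto).
destruct (continuity_ab_maj (fun t => Rabs (g (x,t))) y0 y1) as [Mx [HMx HMx']].
{ destruct (HAB x); lra. }
{ intros; apply Ct_pt, Ct_abs, Cont_slice; auto. }
set (M := Rabs (g (x, Mx))). assert (HM0 : 0 <= M) by apply Rabs_pos.
assert (Hy : y0 <= y1) by (destruct (HAB x); lra).
assert (He1 : 0 < eps / (2 * (y1 - y0 + 1))) by (apply Rdiv_lt_0_compat; lra).
destruct (uniform_continuity_2d_1d' (fun u v => g (u,v)) y0 y1 x) with (eps := mkposreal _ He1) as [d1 Hd1].
{ intros; apply Hg. }
assert (He2 : 0 < eps / (4 * (M + 1))) by (apply Rdiv_lt_0_compat; lra).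
destruct (HA x _ He2) as [dA [HdA HdA']]. destruct (HB x _ He2) as [dB [HdB HdB']].
exists (Rmin d1 (Rmin dA dB)). split.
{ apply Rmin_glb_lt. apply cond_pos. apply Rmin_glb_lt; auto. }
intros x' Hx'.
assert (Hx1 : Rabs (x' - x) < d1) by (apply Rlt_le_trans with (Rmin d1 (Rmin dA dB)); auto; apply Rmin_l).
assert (HxA : Rabs (x' - x) < dA) by (apply Rlt_le_trans with (Rmin d1 (Rmin dA dB)); auto; eapply Rle_trans; [apply Rmin_r|apply Rmin_l]).
assert (HxB : Rabs (x' - x) < dB) by (apply Rlt_le_trans with (Rmin d1 (Rmin dA dB)); auto; eapply Rle_trans; [apply Rmin_r|apply Rmin_r]).
specialize (HdA' x' HxA). specialize (HdB' x' HxB).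
destruct (HAB x) as [[Ha1 Ha2] Ha3]. destruct (HAB x') as [[Hb1 Hb2] Hb3].
assert (U : forall t, y0 <= t <= y1 -> Rabs (g (x',t) - g (x,t)) < eps / (2 * (y1 - y0 + 1))).
{ intros t Ht. apply Rabs_def2 in Hx1.
  apply (Hd1 t x t x'); try lra. rewrite Rminus_diag, Rabs_R0. apply cond_pos. }
set (A' := A x') in *. set (B' := B x') in *.
assert (E1 : CRInt (fun y => g (x',y)) A' B' - CRInt (fun y => g (x,y)) A' B' =
             CRInt (fun y => g (x',y) - g (x,y)) A' B') by (symmetry; apply RInt_minusR; auto).
assert (E2 : CRInt (fun y => g (x,y)) A' B' = CRInt (fun y => g (x,y)) A' (A x) + CRInt (fun y => g (x,y)) (A x) (B x) + CRInt (fun y => g (x,y)) (B x) B').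
{ rewrite RInt_ChaslesR, RInt_ChaslesR; auto. }
assert (T1 : Rabs (CRInt (fun y => g (x',y) - g (x,y)) A' B') <= Rabs (B' - A') * (eps / (2 * (y1 - y0 + 1)))).
{ apply abs_RInt_gen. apply ex_RInt_minusR; auto.
  intros t Ht. apply Rlt_le, U. rewrite Rmin_left, Rmax_right in Ht; lra. }
assert (T2 : Rabs (CRInt (fun y => g (x,y)) A' (A x)) <= Rabs (A x - A') * M).
{ apply abs_RInt_gen; auto. intros t Ht. apply HMx.
  unfold Rmin, Rmax in Ht; destruct Rle_dec; lra. }
assert (T3 : Rabs (CRInt (fun y => g (x,y)) (B x) B') <= Rabs (B' - B x) * M).
{ apply abs_RInt_gen; auto. intros t Ht. apply HMx.
  unfold Rmin, Rmax in Ht; destruct Rle_dec; lra. }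
replace (CRInt (fun y => g (x',y)) A' B' - CRInt (fun y => g (x,y)) (A x) (B x)) with
  (CRInt (fun y => g (x',y) - g (x,y)) A' B' + CRInt (fun y => g (x,y)) A' (A x) + CRInt (fun y => g (x,y)) (B x) B') by lra.
eapply Rle_lt_trans. apply Rabs_triang. eapply Rle_lt_trans. apply Rplus_le_compat_r, Rabs_triang.
assert (Q1 : Rabs (B' - A') * (eps / (2 * (y1 - y0 + 1))) < eps / 2).
{ rewrite Rabs_right by lra. 
  apply Rle_lt_trans with ((y1 - y0) * (eps / (2 * (y1 - y0 + 1)))). apply Rmult_le_compat_r; lra.
  apply Rmult_lt_reg_l with (2 * (y1 - y0 + 1)). lra. field_simplify; lra. }
assert (Q2 : Rabs (A x - A') * M <= eps / (4 * (M + 1)) * M).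
{ apply Rmult_le_compat_r; auto. rewrite Rabs_minus_sym. lra. }
assert (Q3 : Rabs (B' - B x) * M <= eps / (4 * (M + 1)) * M).
{ apply Rmult_le_compat_r; auto. lra. }
assert (Q4 : eps / (4 * (M + 1)) * M < eps / 4).
{ apply Rmult_lt_reg_l with (4 * (M + 1)). lra. field_simplify; lra. }
lra.
Qed.

Fixpoint lo (y0 : R) (K : list (R*R*R)) (x : R) : R :=
  match K with
  | [] => y0
  | ((a,b),c) :: K' => if Rlt_dec b 0 then Rmax ((c - a*x) * / b) (lo y0 K' x) else lo y0 K' x
  end.
Fixpoint up (y1 : R) (K : list (R*R*R)) (x : R) : R :=
  match K with
  | [] => y1
  | ((a,b),c) :: K' => if Rlt_dec 0 b then Rmin ((c - a*x) * / b) (up y1 K' x) else up y1 K' x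
  end.
Fixpoint okx (K : list (R*R*R)) (x : R) : Prop :=
  match K with
  | [] => True
  | ((a,b),c) :: K' => (b = 0 -> a * x <= c) /\ okx K' x
  end.

Lemma inQ_nil q : inQ [] q.
Proof. constructor. Qed.
Lemma inQ_cons a b c K q : inQ (((a,b),c)::K) q <-> a * fst q + b * snd q <= c /\ inQ K q.
Proof. unfold inQ. rewrite Forall_cons_iff. tauto. Qed.

Lemma lo_ge y0 K x : y0 <= lo y0 K x.
Proof. induction K as [|[[a b] c] K IH]; simpl; [lra|]. destruct Rlt_dec; auto. eapply Rle_trans; [apply IH|apply Rmax_r]. Qed.
Lemma up_le y1 K x : up y1 K x <= y1.
Proof. induction K as [|[[a b] c] K IH]; simpl; [lra|]. destruct Rlt_dec; auto. eapply Rle_trans; [apply Rmin_r|apply IH]. Qed.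

Lemma Ct_lo y0 K : Ct (lo y0 K).
Proof. induction K as [|[[a b] c] K IH]; simpl. apply Ct_const. destruct Rlt_dec; auto. apply Ct_max; auto. apply Ct_lin. Qed.
Lemma Ct_up y1 K : Ct (up y1 K).
Proof. induction K as [|[[a b] c] K IH]; simpl. apply Ct_const. destruct Rlt_dec; auto. apply Ct_min; auto. apply Ct_lin. Qed.

Lemma neg_iff a b c x y : b < 0 -> (a * x + b * y <= c <-> (c - a*x) * / b <= y).
Proof.
intros Hb. split; intros H.
- apply Rmult_le_reg_l with (-b); [lra|]. replace (-b * ((c - a*x) * /b)) with (-(c - a*x)) by (field; lra). lra.
- assert (-b * ((c - a*x) * /b) <= -b * y) by (apply Rmult_le_compat_l; lra).
  replace (-b * ((c - a*x) * /b)) with (-(c - a*x)) in H0 by (field; lra). lra.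
Qed.
Lemma pos_iff a b c x y : 0 < b -> (a * x + b * y <= c <-> y <= (c - a*x) * / b).
Proof.
intros Hb. split; intros H.
- apply Rmult_le_reg_l with (b); [lra|]. replace (b * ((c - a*x) * /b)) with ((c - a*x)) by (field; lra). lra.
- assert (b * y <= b * ((c - a*x) * /b)) by (apply Rmult_le_compat_l; lra).
  replace (b * ((c - a*x) * /b)) with ((c - a*x)) in H0 by (field; lra). lra.
Qed.

Lemma sect y0 y1 K x y : y0 <= y <= y1 ->
  (inQ K (x,y) <-> okx K x /\ lo y0 K x <= y <= up y1 K x).
Proof.
intros Hy. induction K as [|[[a b] c] K IH]; simpl.
- split; intros; [repeat split; lra | apply inQ_nil].
- rewrite inQ_cons, IH. simpl.
  destruct (Rlt_dec b 0) as [Hb|Hb]; destruct (Rlt_dec 0 b) as [Hb'|Hb']; try lra.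
  + rewrite neg_iff by auto. split.
    * intros [H1 [H2 [H3 H4]]]. repeat split; auto; try lra. apply Rmax_lub; auto.
    * intros [[_ H2] [H3 H4]]. assert (T1 := Rmax_l ((c - a*x) * /b) (lo y0 K x)). assert (T2 := Rmax_r ((c - a*x) * /b) (lo y0 K x)). repeat split; auto; lra.
  + rewrite pos_iff by auto. split.
    * intros [H1 [H2 [H3 H4]]]. repeat split; auto; try lra. apply Rmin_glb; auto.
    * intros [[_ H2] [H3 H4]]. assert (T1 := Rmin_l ((c - a*x) * /b) (up y1 K x)). assert (T2 := Rmin_r ((c - a*x) * /b) (up y1 K x)). repeat split; auto; lra.
  + assert (b = 0) by lra. subst b. split.
    * intros [H1 H2]. repeat split; try tauto. intros _; lra.
    * intros [[H1 H2] H3]. split; [|tauto]. specialize (H1 eq_refl). lra.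
Qed.

Lemma ind_and (P P' : Prop) : ind (P /\ P') = ind P * ind P'.
Proof. unfold ind. destruct (excluded_middle_informative (P /\ P')); destruct (excluded_middle_informative P); destruct (excluded_middle_informative P'); try tauto; lra. Qed.

Lemma inner_ex y0 y1 K x (h : R -> R) : y0 <= y1 -> ex_RInt h y0 y1 ->
  ex_RInt (fun y => ind (inQ K (x,y)) * h y) y0 y1.
Proof.
intros Hy Hh. induction K as [|[[a b] c] K IH].
- apply (@ex_RInt_ext R_NormedModule h); auto. intros. rewrite ind_T by apply inQ_nil. simpl; ring.
- apply (@ex_RInt_ext R_NormedModule (fun y => ind (b * y <= c - a * x) * (ind (inQ K (x,y)) * h y))).
  + intros t _. rewrite (ind_ext _ _ (inQ_cons a b c K (x,t))). rewrite ind_and. simpl.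
    rewrite (ind_ext (a * x + b * t <= c) (b * t <= c - a * x)) by lra. simpl; ring.
  + apply ex_RInt_ind_lin; auto.
Qed.

Lemma okx_ex x0 x1 K (h : R -> R) : x0 <= x1 -> ex_RInt h x0 x1 ->
  ex_RInt (fun x => ind (okx K x) * h x) x0 x1.
Proof.
intros Hx Hh. induction K as [|[[a b] c] K IH].
- apply (@ex_RInt_ext R_NormedModule h); auto. intros. simpl. rewrite ind_T by auto. simpl; ring.
- simpl. destruct (Req_dec b 0) as [Hb|Hb].
  + apply (@ex_RInt_ext R_NormedModule (fun x => ind (a * x <= c) * (ind (okx K x) * h x))).
    * intros t _. rewrite ind_and. rewrite (ind_ext (b = 0 -> a * t <= c) (a * t <= c)) by (split; auto). simpl; ring.
    * apply ex_RInt_ind_lin; auto.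
  + apply (@ex_RInt_ext R_NormedModule (fun x => (ind (okx K x) * h x))); auto.
    intros t _. rewrite ind_and. rewrite (ind_T (b = 0 -> a * t <= c)) by tauto. simpl; ring.
Qed.

Lemma Good_ind x0 x1 y0 y1 K g : x0 <= x1 -> y0 <= y1 -> Cont g ->
  Good x0 x1 y0 y1 (fun q => ind (inQ K q) * g q).
Proof.
intros Hx Hy Hg.
assert (exg : forall x a b, ex_RInt (fun y => g (x,y)) a b) by (intros; apply ex_RInt_Ct, Cont_slice; auto).
assert (exG : forall x, ex_RInt (fun y => ind (inQ K (x,y)) * g (x,y)) y0 y1).
{ intros x. apply inner_ex; auto. }
split; auto.
set (A := fun x => Rmin (lo y0 K x) y1). set (B := fun x => Rmax (A x) (up y1 K x)).
assert (HAB : forall x, y0 <= A x <= B x /\ B x <= y1).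
{ intros x. unfold B, A. pose proof (lo_ge y0 K x). pose proof (up_le y1 K x).
  unfold Rmin, Rmax; repeat destruct Rle_dec; lra. }
assert (Ev : forall x, CRInt (fun y => ind (inQ K (x,y)) * g (x,y)) y0 y1 =
   ind (okx K x) * CRInt (fun y => g (x,y)) (A x) (B x)).
{ intros x. set (G := fun y => ind (inQ K (x,y)) * g (x,y)).
  destruct (HAB x) as [[H1 H2] H3].
  destruct (excluded_middle_informative (okx K x)) as [Ok|NOk].
  - rewrite ind_T by auto.
    assert (e1 : ex_RInt G y0 (A x)) by (apply (@ex_RInt_Chasles_1 R_CompleteNormedModule G y0 (A x) y1); [lra | try apply exG; try assumption]).
    assert (e2 : ex_RInt G (A x) y1) by (apply (@ex_RInt_Chasles_2 R_CompleteNormedModule G y0 (A x) y1); [lra | try apply exG; try assumption]).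
    assert (e3 : ex_RInt G (A x) (B x)) by (apply (@ex_RInt_Chasles_1 R_CompleteNormedModule G (A x) (B x) y1); [lra | try apply exG; try assumption]).
    assert (e4 : ex_RInt G (B x) y1) by (apply (@ex_RInt_Chasles_2 R_CompleteNormedModule G (A x) (B x) y1); [lra | try apply exG; try assumption]).
    rewrite <- (RInt_ChaslesR G y0 (A x) y1) by auto.
    rewrite <- (RInt_ChaslesR G (A x) (B x) y1) by auto.
    assert (Z1 : CRInt G y0 (A x) = 0).
    { rewrite <- (RInt_zeroR y0 (A x)). apply RInt_ext. intros y Hy'.
      rewrite Rmin_left, Rmax_right in Hy' by lra. unfold G.
      rewrite ind_F. apply Rmult_0_l. rewrite (sect y0 y1) by lra. intros [_ [Hl _]].
      unfold A in Hy'. assert (Rmin (lo y0 K x) y1 <= lo y0 K x) by apply Rmin_l. lra. }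
    assert (Z3 : CRInt G (B x) y1 = 0).
    { rewrite <- (RInt_zeroR (B x) y1). apply RInt_ext. intros y Hy'.
      rewrite Rmin_left, Rmax_right in Hy' by lra. unfold G.
      rewrite ind_F. apply Rmult_0_l. rewrite (sect y0 y1) by lra. intros [_ [_ Hl]].
      unfold B in Hy'. assert (up y1 K x <= Rmax (A x) (up y1 K x)) by apply Rmax_r. lra. }
    assert (Z2 : CRInt G (A x) (B x) = CRInt (fun y => g (x,y)) (A x) (B x)).
    { apply RInt_ext. intros y Hy'.
      rewrite Rmin_left, Rmax_right in Hy' by lra. unfold G.
      rewrite ind_T. apply Rmult_1_l. rewrite (sect y0 y1) by lra. split; auto.
      pose proof (up_le y1 K x). unfold B, A in Hy'. unfold Rmin, Rmax in Hy'. repeat destruct Rle_dec; lra. }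
    rewrite Z1, Z2, Z3, Rplus_0_l, Rplus_0_r, Rmult_1_l; reflexivity.
  - rewrite (ind_F (okx K x)) by auto. rewrite Rmult_0_l.
    rewrite <- (RInt_zeroR y0 y1). apply RInt_ext. intros y Hy'.
    rewrite Rmin_left, Rmax_right in Hy' by lra. unfold G.
    rewrite ind_F. apply Rmult_0_l. rewrite (sect y0 y1) by lra. tauto. }
apply (@ex_RInt_ext R_NormedModule (fun x => ind (okx K x) * CRInt (fun y => g (x,y)) (A x) (B x))).
- intros; symmetry; apply Ev.
- apply okx_ex; auto. apply ex_RInt_Ct. apply param_cont with y0 y1; auto.
  + unfold A. apply Ct_min. apply Ct_lo. apply Ct_const.
  + unfold B, A. apply Ct_max. apply Ct_min. apply Ct_lo. apply Ct_const. apply Ct_up.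
Qed.

Lemma dist_small (q p : pt) d : Rabs (fst q - fst p) < d -> Rabs (snd q - snd p) < d -> dist q p < 2 * d.
Proof.
intros H1 H2. unfold dist.
destruct (sqrt_plus_sqr (fst q - fst p) (snd q - snd p)) as [_ H].
assert (S2 : sqrt 2 <= 2).
{ replace 2 with (sqrt (2^2)) at 2 by (apply sqrt_pow2; lra). apply sqrt_le_1_alt; lra. }
assert (M : Rmax (Rabs (fst q - fst p)) (Rabs (snd q - snd p)) < d) by (apply Rmax_lub_lt; auto).
assert (0 <= Rmax (Rabs (fst q - fst p)) (Rabs (snd q - snd p))) by (eapply Rle_trans; [apply Rabs_pos|apply Rmax_l]).
assert (0 <= sqrt 2) by apply sqrt_pos.
eapply Rle_lt_trans. apply H. nra.
Qed.

Lemma cont2_bound f p : cont2 f -> exists d B, 0 < d /\ 0 <= B /\ forall q, dist q p < d -> Rabs (f q) <= B.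
Proof.
intros H. destruct (H p 1) as [d [Hd Hd']]. lra.
exists d, (Rabs (f p) + 1). split; auto. split. pose proof (Rabs_pos (f p)); lra.
intros q Hq. specialize (Hd' q Hq).
pose proof (Rabs_triang (f q - f p) (f p)). replace (f q - f p + f p) with (f q) in H0 by ring. lra.
Qed.

Lemma C2_cont phi : C2_2 phi -> Cont phi.
Proof.
intros [fx [fy [Dx [Dy [[gx [gy [_ [_ [Cfx _]]]]] [gx' [gy' [_ [_ [Cfy _]]]]]]]]]].
intros x y eps.
destruct (cont2_bound fx (x,y) Cfx) as [dx [Bx [Hdx [HBx HBx']]]].
destruct (cont2_bound fy (x,y) Cfy) as [dy [By [Hdy [HBy HBy']]]].
assert (Hd : 0 < Rmin (Rmin dx dy / 2) (eps / (Bx + By + 1))).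
{ apply Rmin_glb_lt. assert (0 < Rmin dx dy) by (apply Rmin_glb_lt; auto). lra. apply Rdiv_lt_0_compat. apply cond_pos. lra. }
exists (mkposreal _ Hd). intros u v Hu Hv. simpl in Hu, Hv.
assert (Hm1 := Rmin_l (Rmin dx dy / 2) (eps / (Bx + By + 1))).
assert (Hm2 := Rmin_r (Rmin dx dy / 2) (eps / (Bx + By + 1))).
assert (Hm3 := Rmin_l dx dy). assert (Hm4 := Rmin_r dx dy).
set (d := Rmin (Rmin dx dy / 2) (eps / (Bx + By + 1))) in *.
destruct (MVT_abs (fun t => phi (t, v)) (fun t => fx (t, v)) x u) as [c [Ec Hc]].
{ intros c _. apply (Dx (c, v)). }
destruct (MVT_abs (fun t => phi (x, t)) (fun t => fy (x, t)) y v) as [c' [Ec' Hc']].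
{ intros c' _. apply (Dy (x, c')). }
simpl in Ec, Ec'.
assert (Bc : Rabs (fx (c, v)) <= Bx).
{ apply HBx'. replace dx with (2 * (dx / 2)) by field. apply dist_small; simpl.
  - unfold Rmin, Rmax in Hc; destruct Rle_dec; apply Rabs_def2 in Hu; apply Rabs_def1; lra.
  - lra. }
assert (Bc' : Rabs (fy (x, c')) <= By).
{ apply HBy'. replace dy with (2 * (dy / 2)) by field. apply dist_small; simpl.
  - rewrite Rminus_diag, Rabs_R0; lra.
  - unfold Rmin, Rmax in Hc'; destruct Rle_dec; apply Rabs_def2 in Hv; apply Rabs_def1; lra. }
replace (phi (u, v) - phi (x, y)) with ((phi (u, v) - phi (x, v)) + (phi (x, v) - phi (x, y))) by ring.
eapply Rle_lt_trans. apply Rabs_triang. rewrite Ec, Ec'.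
assert (Rabs (fx (c, v)) * Rabs (u - x) <= Bx * d) by (apply Rmult_le_compat; auto using Rabs_pos; lra).
assert (Rabs (fy (x, c')) * Rabs (v - y) <= By * d) by (apply Rmult_le_compat; auto using Rabs_pos; lra).
assert ((Bx + By) * d < eps).
{ apply Rle_lt_trans with ((Bx + By) * (eps / (Bx + By + 1))). apply Rmult_le_compat_l; lra.
  apply Rmult_lt_reg_l with (Bx + By + 1). lra. field_simplify; [|lra]. pose proof (cond_pos eps). nra. }
lra.
Qed.

Lemma Cont_ext f g : (forall q, f q = g q) -> Cont f -> Cont g.
Proof. intros E H. replace g with f; auto. apply functional_extensionality; auto. Qed.
Lemma Cont_plus f g : Cont f -> Cont g -> Cont (fun q => f q + g q).
Proof. intros Hf Hg x y. apply (continuity_2d_pt_plus (fun u v => f (u,v)) (fun u v => g (u,v))); auto. Qed.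
Lemma Cont_mult f g : Cont f -> Cont g -> Cont (fun q => f q * g q).
Proof. intros Hf Hg x y. apply (continuity_2d_pt_mult (fun u v => f (u,v)) (fun u v => g (u,v))); auto. Qed.
Lemma Cont_const c : Cont (fun _ => c).
Proof. intros x y. apply continuity_2d_pt_const. Qed.
Lemma Cont_fst : Cont (fun q => fst q).
Proof. intros x y. apply continuity_2d_pt_id1. Qed.
Lemma Cont_snd : Cont (fun q => snd q).
Proof. intros x y. apply continuity_2d_pt_id2. Qed.
Lemma Cont_min f g : Cont f -> Cont g -> Cont (fun q => Rmin (f q) (g q)).
Proof.
intros Hf Hg x y eps. destruct (Hf x y eps) as [d1 H1]. destruct (Hg x y eps) as [d2 H2].
assert (Hd : 0 < Rmin d1 d2) by (apply Rmin_glb_lt; apply cond_pos).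
exists (mkposreal _ Hd). intros u v Hu Hv. simpl in Hu, Hv.
apply Rmin_lip; [apply H1|apply H2]; try (apply Rlt_le_trans with (Rmin d1 d2); auto; try apply Rmin_l; apply Rmin_r).
Qed.

Lemma dist_sq (q a : pt) : dist q a ^ 2 = (fst q - fst a) ^ 2 + (snd q - snd a) ^ 2.
Proof. unfold dist. apply pow2_sqrt. apply Rplus_le_le_0_compat; apply pow2_ge_0. Qed.

Lemma Cont_dist2 (a : pt) : Cont (fun q => dist q a ^ 2).
Proof.
apply Cont_ext with (fun q => (fst q - fst a) * (fst q - fst a) + (snd q - snd a) * (snd q - snd a)).
intros; rewrite dist_sq; ring.
apply Cont_plus; apply Cont_mult; apply Cont_plus; try apply Cont_fst; try apply Cont_snd; apply Cont_const.
Qed.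

Lemma Cont_minR {A} (l : list A) (F : A -> pt -> R) : (forall a, In a l -> Cont (F a)) ->
  Cont (fun q => minR (map (fun a => F a q) l)).
Proof.
destruct l as [|a l]; simpl; intros H. apply Cont_const.
assert (Ca : Cont (F a)) by auto.
assert (H' : forall b, In b l -> Cont (F b)) by auto. clear H.
induction l as [|b l IH]; simpl.
- exact Ca.
- apply Cont_min. apply H'; simpl; auto. apply IH. intros; apply H'; simpl; auto.
Qed.

Definition hp (a b : pt) : R*R*R := ((2*(fst b - fst a), 2*(snd b - snd a)), (fst b^2 + snd b^2 - (fst a^2 + snd a^2))).

Lemma hp_iff q a b : (let '(al,be,c) := hp a b in al*fst q + be*snd q <= c) <-> dist q a <= dist q b.
Proof.
simpl. unfold dist.
set (sa := (fst q - fst a) ^ 2 + (snd q - snd a) ^ 2). set (sb := (fst q - fst b) ^ 2 + (snd q - snd b) ^ 2).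
assert (E : sb - sa = (fst b ^ 2 + snd b ^ 2 - (fst a ^ 2 + snd a ^ 2)) - (2 * (fst b - fst a) * fst q + 2 * (snd b - snd a) * snd q)) by (unfold sa, sb; ring).
assert (0 <= sa) by (unfold sa; apply Rplus_le_le_0_compat; apply pow2_ge_0).
assert (0 <= sb) by (unfold sb; apply Rplus_le_le_0_compat; apply pow2_ge_0).
split; intros H3.
- apply sqrt_le_1_alt. lra.
- apply sqrt_le_0 in H3; auto. lra.
Qed.

Definition bis (n : nat) (p : nat -> pt) (i j : nat) : list (R*R*R) :=
  flat_map (fun v => map (fun w => hp (p v) (p w))
     (filter (fun w => andb (negb (Nat.eqb w i)) (negb (Nat.eqb w j))) (seq 0 n))) [i; j].

Lemma inQ_app K1 K2 q : inQ (K1 ++ K2) q <-> inQ K1 q /\ inQ K2 q.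
Proof. unfold inQ. apply Forall_app. Qed.

Lemma inQ_iff K q : inQ K q <-> forall h, In h K -> (let '(a, b, c) := h in a * fst q + b * snd q <= c).
Proof. unfold inQ. apply Forall_forall. Qed.

Lemma inV_iff Q n p i j q : inV Q n p i j q <-> inQ (Q ++ bis n p i j) q.
Proof.
unfold inV. rewrite inQ_app. rewrite (inQ_iff (bis n p i j)).
split; intros [HQ HH]; split; auto.
- intros h Hh. unfold bis in Hh. apply in_flat_map in Hh. destruct Hh as [v [Hv Hh]].
  apply in_map_iff in Hh. destruct Hh as [w [Ew Hw]]. subst h.
  apply filter_In in Hw. destruct Hw as [Hw Ht]. apply in_seq in Hw.
  apply andb_prop in Ht. destruct Ht as [T1 T2]. apply Bool.negb_true_iff, Nat.eqb_neq in T1. apply Bool.negb_true_iff, Nat.eqb_neq in T2.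
  apply hp_iff. apply HH; auto. simpl in Hv. intuition. lia.
- intros v w Hv Hw Hi Hj. apply hp_iff. apply HH. unfold bis. apply in_flat_map. exists v. split.
  simpl; intuition.
  apply in_map_iff. exists w. split; auto. apply filter_In. split. apply in_seq; lia.
  apply andb_true_intro; split; apply Bool.negb_true_iff, Nat.eqb_neq; auto.
Qed.

Lemma Good_V x0 x1 y0 y1 Q n p i j g : x0 <= x1 -> y0 <= y1 -> Cont g ->
  Good x0 x1 y0 y1 (fun q => ind (inV Q n p i j q) * g q).
Proof.
intros. apply (Good_ext x0 x1 y0 y1 (fun q => ind (inQ (Q ++ bis n p i j) q) * g q)).
intros q. rewrite (ind_ext _ _ (inV_iff Q n p i j q)). auto.
apply Good_ind; auto.
Qed.

Lemma sumR_nonneg {A} (l : list A) f : (forall x, In x l -> 0 <= f x) -> 0 <= sumR (map f l).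
Proof. induction l; simpl; intros H. lra. assert (0 <= f a) by auto. assert (0 <= sumR (map f l)) by auto. lra. Qed.

Lemma sumR_ge1 {A} (l : list A) f a : (forall x, In x l -> 0 <= f x) -> In a l -> f a <= sumR (map f l).
Proof.
induction l as [|b l IH]; simpl; intros H Ha. contradiction.
destruct Ha as [E|Ha].
- subst. assert (0 <= sumR (map f l)) by (apply sumR_nonneg; auto). lra.
- assert (0 <= f b) by auto. assert (f a <= sumR (map f l)) by auto. lra.
Qed.

Lemma sumR_ge2 {A} (l : list A) f a b : NoDup l -> (forall x, In x l -> 0 <= f x) -> In a l -> In b l -> a <> b ->
  f a + f b <= sumR (map f l).
Proof.
induction l as [|c l IH]; simpl; intros Hn H Ha Hb Hab. contradiction.
inversion Hn; subst.
destruct Ha as [Ea|Ha]; destruct Hb as [Eb|Hb].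
- subst; contradiction.
- subst. assert (f b <= sumR (map f l)) by (apply sumR_ge1; auto). lra.
- subst. assert (f a <= sumR (map f l)) by (apply sumR_ge1; auto). lra.
- assert (0 <= f c) by auto. assert (f a + f b <= sumR (map f l)) by auto. lra.
Qed.

Lemma sumR_zero {A} (l : list A) f : (forall x, In x l -> f x = 0) -> sumR (map f l) = 0.
Proof. induction l; simpl; intros H. auto. rewrite H, IHl; auto. lra. Qed.

Lemma sumR_one {A} (l : list A) f a : NoDup l -> In a l -> (forall x, In x l -> x <> a -> f x = 0) -> sumR (map f l) = f a.
Proof.
induction l as [|c l IH]; simpl; intros Hn Ha H. contradiction.
inversion Hn; subst. destruct Ha as [E|Ha].
- subst. rewrite sumR_zero. ring. intros x Hx. apply H; auto. intro; subst; contradiction.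
- rewrite H, IH; auto. ring. intro; subst; contradiction.
Qed.

Lemma sumR_two {A} (l : list A) f a b : NoDup l -> In a l -> In b l -> a <> b ->
  (forall x, In x l -> x <> a -> x <> b -> f x = 0) -> sumR (map f l) = f a + f b.
Proof.
induction l as [|c l IH]; simpl; intros Hn Ha Hb Hab H. contradiction.
inversion Hn; subst. destruct Ha as [Ea|Ha]; destruct Hb as [Eb|Hb].
- subst; contradiction.
- subst. rewrite (sumR_one l f b); auto. intros x Hx Hxb. apply H; auto. intro; subst; contradiction.
- subst. rewrite (sumR_one l f a); auto. ring. intros x Hx Hxb. apply H; auto. intro; subst; contradiction.
- rewrite H, IH; auto. ring. intro; subst; contradiction. intro; subst; contradiction.
Qed.

Lemma sumR_pos {A} (l : list A) f a : (forall x, In x l -> 0 <= f x) -> In a l -> 0 < f a -> 0 < sumR (map f l).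
Proof. intros. assert (f a <= sumR (map f l)) by (apply sumR_ge1; auto). lra. Qed.

Lemma minR_le (l : list R) x : In x l -> minR l <= x.
Proof.
destruct l as [|a l]; simpl. contradiction.
intros H. revert H. induction l as [|b l IH]; simpl; intros H.
- destruct H as [H|H]; [subst; lra | contradiction].
- destruct H as [H|[H|H]].
  + subst. eapply Rle_trans. apply Rmin_r. apply IH; auto.
  + subst. apply Rmin_l.
  + eapply Rle_trans. apply Rmin_r. apply IH; auto.
Qed.

Lemma minR_ge (l : list R) m : l <> [] -> (forall x, In x l -> m <= x) -> m <= minR l.
Proof.
destruct l as [|a l]; simpl. tauto.
intros _ H. assert (m <= a) by auto. assert (H' : forall x, In x l -> m <= x) by auto. clear H.
induction l as [|b l IH]; simpl; auto.
apply Rmin_glb; auto. apply H'; simpl; auto. apply IH. intros; apply H'; simpl; auto.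
Qed.

Lemma in_pairs n a b : In (a,b) (pairs n) <-> (a < b < n)%nat.
Proof.
unfold pairs. rewrite in_flat_map. split.
- intros [c [Hc H]]. apply in_seq in Hc. apply in_map_iff in H. destruct H as [d [E Hd]].
  inversion E; subst. apply in_seq in Hd. lia.
- intros H. exists b. split. apply in_seq; lia. apply in_map_iff. exists a. split; auto. apply in_seq; lia.
Qed.

Lemma argmin (e : nat -> R) (P : nat -> Prop) n : (exists k, (k < n)%nat /\ P k) ->
  exists m, (m < n)%nat /\ P m /\ forall k, (k < n)%nat -> P k -> e m <= e k.
Proof.
induction n as [|n IH]; intros [k [Hk Pk]]. lia.
destruct (classic (exists k, (k < n)%nat /\ P k)) as [Ex|NEx].
- destruct (IH Ex) as [m [Hm [Pm Hmin]]].
  destruct (classic (P n /\ e n < e m)) as [[Pn Hlt]|Hno].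
  + exists n. split. lia. split; auto. intros k' Hk' Pk'. destruct (Nat.eq_dec k' n). subst; lra.
    assert (e m <= e k') by (apply Hmin; auto; lia). lra.
  + exists m. split. lia. split; auto. intros k' Hk' Pk'. destruct (Nat.eq_dec k' n).
    * subst. destruct (Rlt_dec (e n) (e m)); [exfalso; tauto| lra].
    * apply Hmin; auto; lia.
- exists n. assert (P n) by (destruct (Nat.eq_dec k n); [subst; auto | exfalso; apply NEx; exists k; split; auto; lia]).
  split. lia. split; auto. intros k' Hk' Pk'. destruct (Nat.eq_dec k' n). subst; lra.
  exfalso; apply NEx; exists k'; split; auto; lia.
Qed.

Definition Vp (e : nat -> R) n i j := forall v w, (v = i \/ v = j) -> (w < n)%nat -> w <> i -> w <> j -> e v <= e w.

Lemma two_nearest (e : nat -> R) n : (2 <= n)%nat ->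
  exists i j, i <> j /\ (i < n)%nat /\ (j < n)%nat /\ Vp e n i j.
Proof.
intros Hn.
destruct (argmin e (fun _ => True) n) as [i [Hi [_ Hmi]]]. exists 0%nat; split; auto; lia.
destruct (argmin e (fun k => k <> i) n) as [j [Hj [Hji Hmj]]].
{ destruct (Nat.eq_dec i 0). exists 1%nat; split; lia. exists 0%nat; split; lia. }
exists i, j. repeat split; auto.
intros v w [E|E] Hw Hwi Hwj; subst; auto.
Qed.

Lemma sq_mono a b : 0 <= a -> a <= b -> a ^ 2 <= b ^ 2.
Proof. intros. nra. Qed.

Lemma cost_min (e : nat -> R) n i j a b : (forall k, 0 <= e k) -> i <> j -> a <> b -> (a < n)%nat -> (b < n)%nat ->
  Vp e n i j -> e i ^ 2 + e j ^ 2 <= e a ^ 2 + e b ^ 2.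
Proof.
intros He Hij Hab Ha Hb V.
assert (M : forall v w, (v = i \/ v = j) -> (w < n)%nat -> w <> i -> w <> j -> e v ^ 2 <= e w ^ 2).
{ intros. apply sq_mono; auto. }
destruct (Nat.eq_dec a i); destruct (Nat.eq_dec a j); destruct (Nat.eq_dec b i); destruct (Nat.eq_dec b j); subst; try lia; try lra.
- assert (e j ^ 2 <= e b ^ 2) by (apply M; auto). lra.
- assert (e i ^ 2 <= e b ^ 2) by (apply M; auto). lra.
- assert (e j ^ 2 <= e a ^ 2) by (apply M; auto). lra.
- assert (e i ^ 2 <= e a ^ 2) by (apply M; auto). lra.
- assert (e i ^ 2 <= e a ^ 2) by (apply M; auto). assert (e j ^ 2 <= e b ^ 2) by (apply M; auto). lra.
Qed.

Lemma generic_unique (e : nat -> R) n i j a b :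
  (forall u v, (u < n)%nat -> (v < n)%nat -> u <> v -> e u <> e v) ->
  i <> j -> (i < n)%nat -> (j < n)%nat -> Vp e n i j ->
  a <> b -> (a < n)%nat -> (b < n)%nat -> Vp e n a b ->
  (a = i /\ b = j) \/ (a = j /\ b = i).
Proof.
intros D Hij Hi Hj Vij Hab Ha Hb Vab.
assert (Ii : a = i \/ b = i).
{ destruct (Nat.eq_dec a i); auto. destruct (Nat.eq_dec b i); auto. exfalso.
  assert (e a <= e i) by (apply Vab; auto). assert (e b <= e i) by (apply Vab; auto).
  destruct (Nat.eq_dec a j); destruct (Nat.eq_dec b j); try lia.
  - subst a. assert (e i <= e b) by (apply Vij; auto). assert (e b = e i) by lra. apply (D b i); auto.
  - assert (e i <= e a) by (apply Vij; auto). assert (e a = e i) by lra. apply (D a i); auto.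
  - assert (e i <= e a) by (apply Vij; auto). assert (e a = e i) by lra. apply (D a i); auto. }
assert (Ij : a = j \/ b = j).
{ destruct (Nat.eq_dec a j); auto. destruct (Nat.eq_dec b j); auto. exfalso.
  assert (e a <= e j) by (apply Vab; auto). assert (e b <= e j) by (apply Vab; auto).
  destruct Ii as [E|E]; subst.
  - assert (e j <= e b) by (apply Vij; auto). apply (D b j); auto. lra.
  - assert (e j <= e a) by (apply Vij; auto). apply (D a j); auto. lra. }
destruct Ii; destruct Ij; subst; auto; lia.
Qed.

Lemma inV_Vp Q n p i j q : inV Q n p i j q <-> inQ Q q /\ Vp (fun k => dist q (p k)) n i j.
Proof. unfold inV, Vp. tauto. Qed.

Lemma inV_sym Q n p i j q : inV Q n p i j q -> inV Q n p j i q.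
Proof. unfold inV. intros [H1 H2]; split; auto. intros v w Hv Hw H3 H4. apply H2; auto; tauto. Qed.

Lemma dist_nonneg q a : 0 <= dist q a.
Proof. unfold dist. apply sqrt_pos. Qed.

Lemma Int2_zero x0 x1 y0 y1 (D : pt -> R) (bx : list R) (bY : R -> list R) :
  x0 <= x1 -> y0 <= y1 -> Good x0 x1 y0 y1 D ->
  (forall x y, x0 < x < x1 -> y0 < y < y1 -> ~ In x bx -> ~ In y (bY x) -> D (x,y) = 0) ->
  Int2 x0 x1 y0 y1 D = 0.
Proof.
intros Hx Hy G H. rewrite Int2_eq; auto.
apply is_RInt_unique. apply (is_RInt_finite_zero _ bx); auto.
intros x Hx' Hnx. apply is_RInt_unique. apply (is_RInt_finite_zero _ (bY x)); auto.
Qed.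

Lemma lin4 x0 x1 y0 y1 f1 f2 f3 f4 c1 c2 c3 c4 :
  Good x0 x1 y0 y1 f1 -> Good x0 x1 y0 y1 f2 -> Good x0 x1 y0 y1 f3 -> Good x0 x1 y0 y1 f4 ->
  Int2 x0 x1 y0 y1 (fun q => c1 * f1 q + (c2 * f2 q + (c3 * f3 q + c4 * f4 q))) =
  c1 * Int2 x0 x1 y0 y1 f1 + (c2 * Int2 x0 x1 y0 y1 f2 + (c3 * Int2 x0 x1 y0 y1 f3 + c4 * Int2 x0 x1 y0 y1 f4)).
Proof.
intros G1 G2 G3 G4.
destruct (Good_scal x0 x1 y0 y1 c1 f1 G1) as [S1 E1].
destruct (Good_scal x0 x1 y0 y1 c2 f2 G2) as [S2 E2].
destruct (Good_scal x0 x1 y0 y1 c3 f3 G3) as [S3 E3].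
destruct (Good_scal x0 x1 y0 y1 c4 f4 G4) as [S4 E4].
destruct (Good_plus x0 x1 y0 y1 _ _ S3 S4) as [P34 E34].
destruct (Good_plus x0 x1 y0 y1 _ _ S2 P34) as [P234 E234].
destruct (Good_plus x0 x1 y0 y1 _ _ S1 P234) as [P1234 E1234].
rewrite E1234, E234, E34, E1, E2, E3, E4. auto.
Qed.

Lemma sum_lin (l : list nat) (e A B C D : nat -> R) w1 w2 W :
  sumR (map (fun j => e j * (/2 * A j - w1 * B j - w2 * C j + /2 * W * D j)) l) =
  /2 * sumR (map (fun j => e j * A j) l) - w1 * sumR (map (fun j => e j * B j) l)
  - w2 * sumR (map (fun j => e j * C j) l) + /2 * W * sumR (map (fun j => e j * D j) l).
Proof. induction l; simpl. ring. rewrite IHl. ring. Qed.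

Lemma sumR_minus (l : list nat) f g : sumR (map f l) - sumR (map g l) = sumR (map (fun i => f i - g i) l).
Proof. induction l; simpl. ring. rewrite <- IHl. ring. Qed.

Lemma sumR_ext (l : list nat) f g : (forall i, In i l -> f i = g i) -> sumR (map f l) = sumR (map g l).
Proof. induction l; simpl; intros H; auto. rewrite H, IHl; auto. Qed.

Section Main.
Variables (Q : list (R * R * R)) (x0 x1 y0 y1 : R) (phi : pt -> R) (n : nat) (p : nat -> pt).
Hypothesis HQbox : forall q, inQ Q q -> inBox x0 x1 y0 y1 q.
Hypothesis Cphi : Cont phi.
Hypothesis Hphi_nonneg : forall q, inQ Q q -> 0 <= phi q.
Hypothesis Hn : (3 <= n)%nat.
Hypothesis Hdistinct : forall i j, (i < n)%nat -> (j < n)%nat -> i <> j -> p i <> p j.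
Hypothesis Hx : x0 <= x1.
Hypothesis Hy : y0 <= y1.

Definition Tm (z : nat -> pt) i j q := ind (genPair Q n p i j) * (ind (inV Q n p i j q) * (/2 * dist q (z i) ^ 2 * phi q)).
Definition Sf (z : nat -> pt) q := sumR (map (fun i => sumR (map (fun j => Tm z i j q) (seq 0 n))) (seq 0 n)).
Definition Hf (z : nat -> pt) q := ind (inQ Q q) *
    (minR (map (fun ab => / 2 * ((dist q (z (fst ab)))^2 + (dist q (z (snd ab)))^2)) (pairs n)) * phi q).

Lemma Cont_c (w : pt) : Cont (fun q => /2 * dist q w ^ 2 * phi q).
Proof. apply Cont_mult; auto. apply Cont_mult. apply Cont_const. apply Cont_dist2. Qed.

Lemma Good_Tm z i j : Good x0 x1 y0 y1 (Tm z i j).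
Proof. unfold Tm. apply Good_scal. apply Good_V; auto. apply Cont_c. Qed.

Lemma Good_Sf z : Good x0 x1 y0 y1 (Sf z) /\
  Int2 x0 x1 y0 y1 (Sf z) = sumR (map (fun i => sumR (map (fun j => Int2 x0 x1 y0 y1 (Tm z i j)) (seq 0 n))) (seq 0 n)).
Proof.
unfold Sf.
destruct (Good_sum x0 x1 y0 y1 (seq 0 n) (fun i q => sumR (map (fun j => Tm z i j q) (seq 0 n)))) as [G E].
{ intros i _. apply (Good_sum x0 x1 y0 y1 (seq 0 n) (fun j => Tm z i j)). intros; apply Good_Tm. }
split; auto. rewrite E. apply sumR_ext. intros i _.
apply (Good_sum x0 x1 y0 y1 (seq 0 n) (fun j => Tm z i j)). intros; apply Good_Tm.
Qed.

Lemma Good_Hf z : Good x0 x1 y0 y1 (Hf z).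
Proof.
unfold Hf. apply (Good_ind x0 x1 y0 y1 Q (fun q => minR (map (fun ab => / 2 * ((dist q (z (fst ab)))^2 + (dist q (z (snd ab)))^2)) (pairs n)) * phi q)); auto.
apply Cont_mult; auto. apply (Cont_minR (pairs n) (fun ab q => / 2 * ((dist q (z (fst ab)))^2 + (dist q (z (snd ab)))^2))).
intros ab _. apply Cont_mult. apply Cont_const. apply Cont_plus; apply Cont_dist2.
Qed.

Definition fV i j (g : pt -> R) := fun q => ind (inV Q n p i j q) * g q.
Definition I2 i j := Int2 x0 x1 y0 y1 (fV i j (fun q => (fst q ^ 2 + snd q ^ 2) * phi q)).
Definition IX i j := Int2 x0 x1 y0 y1 (fV i j (fun q => fst q * phi q)).
Definition IY i j := Int2 x0 x1 y0 y1 (fV i j (fun q => snd q * phi q)).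

Lemma Int2_Tm z i j : Int2 x0 x1 y0 y1 (Tm z i j) = ind (genPair Q n p i j) *
  (/2 * I2 i j - fst (z i) * IX i j - snd (z i) * IY i j + /2 * (fst (z i) ^ 2 + snd (z i) ^ 2) * MV x0 x1 y0 y1 Q phi n p i j).
Proof.
unfold Tm. rewrite (proj2 (Good_scal _ _ _ _ _ _ (Good_V x0 x1 y0 y1 Q n p i j _ Hx Hy (Cont_c (z i))))).
f_equal.
assert (GP : forall g, Cont g -> Good x0 x1 y0 y1 (fV i j g)) by (intros; apply Good_V; auto).
set (w := z i).
assert (EQ : forall q, (fun q => ind (inV Q n p i j q) * (/ 2 * dist q w ^ 2 * phi q)) q =
   (fun q => /2 * fV i j (fun q => (fst q ^ 2 + snd q ^ 2) * phi q) q + ((- fst w) * fV i j (fun q => fst q * phi q) q +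
     ((- snd w) * fV i j (fun q => snd q * phi q) q + (/2 * (fst w ^ 2 + snd w ^ 2)) * fV i j phi q))) q).
{ intros q. cbv beta. unfold fV. rewrite dist_sq. field. }
assert (Gf : Good x0 x1 y0 y1 (fun q => ind (inV Q n p i j q) * (/ 2 * dist q w ^ 2 * phi q))).
{ apply Good_V; auto. apply Cont_c. }
rewrite (proj2 (Good_ext x0 x1 y0 y1 _ _ EQ Gf)).
rewrite lin4; try apply GP.
unfold I2, IX, IY, MV. fold (fV i j phi). ring.
- apply Cont_mult; auto. apply Cont_plus; apply Cont_mult; try apply Cont_fst; try apply Cont_snd; apply Cont_mult; try apply Cont_const; try apply Cont_fst; try apply Cont_snd.
- apply Cont_mult; auto. apply Cont_fst.
- apply Cont_mult; auto. apply Cont_snd.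
- auto.
Qed.


Lemma mom_zero i j (h : pt -> R) Rb : Cont h -> (forall q, inQ Q q -> Rabs (h q) <= Rb) ->
  MV x0 x1 y0 y1 Q phi n p i j = 0 -> Int2 x0 x1 y0 y1 (fV i j (fun q => h q * phi q)) = 0.
Proof.
intros Ch Hb HM.
assert (G0 : Good x0 x1 y0 y1 (fV i j phi)) by (apply Good_V; auto).
assert (G1 : Good x0 x1 y0 y1 (fV i j (fun q => h q * phi q))) by (apply Good_V; auto; apply Cont_mult; auto).
assert (E0 : Int2 x0 x1 y0 y1 (fV i j phi) = 0) by exact HM.
destruct (Good_scal x0 x1 y0 y1 Rb _ G0) as [Ga Ea].
destruct (Good_scal x0 x1 y0 y1 (- Rb) _ G0) as [Gb Eb].
assert (L1 : Int2 x0 x1 y0 y1 (fV i j (fun q => h q * phi q)) <= Int2 x0 x1 y0 y1 (fun q => Rb * fV i j phi q)).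
{ apply Int2_le; auto. intros q. unfold fV. destruct (classic (inV Q n p i j q)) as [Hv|Hv].
  - rewrite ind_T by auto. assert (Hq : inQ Q q) by apply Hv. specialize (Hb q Hq). specialize (Hphi_nonneg q Hq).
    revert Hb; unfold Rabs; destruct Rcase_abs; intros; nra.
  - rewrite ind_F by auto. lra. }
assert (L2 : Int2 x0 x1 y0 y1 (fun q => - Rb * fV i j phi q) <= Int2 x0 x1 y0 y1 (fV i j (fun q => h q * phi q))).
{ apply Int2_le; auto. intros q. unfold fV. destruct (classic (inV Q n p i j q)) as [Hv|Hv].
  - rewrite ind_T by auto. assert (Hq : inQ Q q) by apply Hv. specialize (Hb q Hq). specialize (Hphi_nonneg q Hq).
    revert Hb; unfold Rabs; destruct Rcase_abs; intros; nra.
  - rewrite ind_F by auto. lra. }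
rewrite Ea, E0 in L1. rewrite Eb, E0 in L2. lra.
Qed.

Lemma IX_eq i j : IX i j = MV x0 x1 y0 y1 Q phi n p i j * CVx x0 x1 y0 y1 Q phi n p i j.
Proof.
unfold CVx. change (Int2 x0 x1 y0 y1 (fun q => ind (inV Q n p i j q) * (fst q * phi q))) with (IX i j).
destruct (Req_dec (MV x0 x1 y0 y1 Q phi n p i j) 0) as [H|H].
- rewrite H. unfold IX. rewrite (mom_zero i j (fun q => fst q) (Rabs x0 + Rabs x1)); auto. ring.
  apply Cont_fst. intros q Hq. destruct (HQbox q Hq) as [[H1 H2] _].
  unfold Rabs; repeat destruct Rcase_abs; lra.
- field. auto.
Qed.

Lemma IY_eq i j : IY i j = MV x0 x1 y0 y1 Q phi n p i j * CVy x0 x1 y0 y1 Q phi n p i j.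
Proof.
unfold CVy. change (Int2 x0 x1 y0 y1 (fun q => ind (inV Q n p i j q) * (snd q * phi q))) with (IY i j).
destruct (Req_dec (MV x0 x1 y0 y1 Q phi n p i j) 0) as [H|H].
- rewrite H. unfold IY. rewrite (mom_zero i j (fun q => snd q) (Rabs y0 + Rabs y1)); auto. ring.
  apply Cont_snd. intros q Hq. destruct (HQbox q Hq) as [_ [H1 H2]].
  unfold Rabs; repeat destruct Rcase_abs; lra.
- field. auto.
Qed.

Definition Xs i := sumR (map (fun j => ind (genPair Q n p i j) * (MV x0 x1 y0 y1 Q phi n p i j * CVx x0 x1 y0 y1 Q phi n p i j)) (seq 0 n)).
Definition Ys i := sumR (map (fun j => ind (genPair Q n p i j) * (MV x0 x1 y0 y1 Q phi n p i j * CVy x0 x1 y0 y1 Q phi n p i j)) (seq 0 n)).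
Definition Ks i := sumR (map (fun j => ind (genPair Q n p i j) * I2 i j) (seq 0 n)).
Definition Ti (z : nat -> pt) i := /2 * Ks i - fst (z i) * Xs i - snd (z i) * Ys i
   + /2 * (fst (z i) ^ 2 + snd (z i) ^ 2) * MW x0 x1 y0 y1 Q phi n p i.

Lemma Int2_Sf z : Int2 x0 x1 y0 y1 (Sf z) = sumR (map (Ti z) (seq 0 n)).
Proof.
rewrite (proj2 (Good_Sf z)). apply sumR_ext. intros i _.
rewrite (sumR_ext _ _ (fun j => ind (genPair Q n p i j) *
  (/2 * I2 i j - fst (z i) * (MV x0 x1 y0 y1 Q phi n p i j * CVx x0 x1 y0 y1 Q phi n p i j)
   - snd (z i) * (MV x0 x1 y0 y1 Q phi n p i j * CVy x0 x1 y0 y1 Q phi n p i j)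
   + /2 * (fst (z i) ^ 2 + snd (z i) ^ 2) * MV x0 x1 y0 y1 Q phi n p i j))).
- rewrite sum_lin. unfold Ti, Ks, Xs, Ys, MW. reflexivity.
- intros j _. rewrite Int2_Tm, IX_eq, IY_eq. reflexivity.
Qed.

Lemma Tdiff i : 0 < MW x0 x1 y0 y1 Q phi n p i ->
  Ti p i - Ti (fun k => CW x0 x1 y0 y1 Q phi n p k) i =
  /2 * MW x0 x1 y0 y1 Q phi n p i * ((fst (p i) - fst (CW x0 x1 y0 y1 Q phi n p i)) ^ 2 + (snd (p i) - snd (CW x0 x1 y0 y1 Q phi n p i)) ^ 2).
Proof.
intros HM. unfold Ti, CW. simpl. fold (Xs i). fold (Ys i). field. lra.
Qed.

Lemma Tm_nonneg z i j q : 0 <= Tm z i j q.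
Proof.
unfold Tm. apply Rmult_le_pos. apply ind_ge0.
destruct (classic (inV Q n p i j q)) as [Hv|Hv].
- rewrite ind_T by auto. assert (0 <= phi q) by (apply Hphi_nonneg; apply Hv).
  assert (0 <= dist q (z i) ^ 2) by apply pow2_ge_0.
  assert (0 <= / 2 * dist q (z i) ^ 2) by (apply Rmult_le_pos; lra).
  assert (0 <= / 2 * dist q (z i) ^ 2 * phi q) by (apply Rmult_le_pos; lra). lra.
- rewrite ind_F by auto. lra.
Qed.

Lemma Tm_val z i j q : genPair Q n p i j -> inV Q n p i j q -> Tm z i j q = /2 * dist q (z i) ^ 2 * phi q.
Proof. intros. unfold Tm. rewrite !ind_T by auto. ring. Qed.

Lemma Tm_zero z i j q : ~ (genPair Q n p i j /\ inV Q n p i j q) -> Tm z i j q = 0.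
Proof.
intros H. unfold Tm. destruct (classic (genPair Q n p i j)).
- rewrite (ind_F (inV Q n p i j q)) by tauto. ring.
- rewrite (ind_F (genPair Q n p i j)) by tauto. ring.
Qed.

Lemma minR_pair z q i j : (i < n)%nat -> (j < n)%nat -> i <> j ->
  minR (map (fun ab => / 2 * ((dist q (z (fst ab)))^2 + (dist q (z (snd ab)))^2)) (pairs n))
  <= / 2 * (dist q (z i) ^ 2 + dist q (z j) ^ 2).
Proof.
intros Hi Hj Hij. apply minR_le. apply in_map_iff.
destruct (Nat.lt_ge_cases i j).
- exists (i,j). split; auto. apply in_pairs; lia.
- exists (j,i). split. simpl. ring. apply in_pairs; lia.
Qed.

Lemma PW1 z q : Hf z q <= Sf z q.
Proof.
assert (Snn : forall i, 0 <= sumR (map (fun j => Tm z i j q) (seq 0 n))) by (intros; apply sumR_nonneg; intros; apply Tm_nonneg).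
destruct (classic (inQ Q q)) as [HQ|HQ].
2:{ unfold Hf. rewrite ind_F by auto. rewrite Rmult_0_l. apply sumR_nonneg. auto. }
destruct (two_nearest (fun k => dist q (p k)) n) as [i [j [Hij [Hi [Hj V]]]]]. lia.
assert (HV : inV Q n p i j q) by (apply inV_Vp; auto).
assert (HV' : inV Q n p j i q) by (apply inV_sym; auto).
assert (G : genPair Q n p i j) by (repeat split; auto; exists q; auto).
assert (G' : genPair Q n p j i) by (repeat split; auto; exists q; auto).
assert (L : Tm z i j q + Tm z j i q <= Sf z q).
{ unfold Sf. eapply Rle_trans; [| apply (sumR_ge2 (seq 0 n) (fun i => sumR (map (fun j => Tm z i j q) (seq 0 n))) i j)].
  - apply Rplus_le_compat; apply (sumR_ge1 (seq 0 n) (fun j0 => Tm _ _ j0 q)); try (intros; apply Tm_nonneg); apply in_seq; lia.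
  - apply seq_NoDup.
  - intros; auto.
  - apply in_seq; lia.
  - apply in_seq; lia.
  - auto. }
rewrite Tm_val in L by auto. rewrite Tm_val in L by auto.
unfold Hf. rewrite ind_T by auto. rewrite Rmult_1_l.
assert (0 <= phi q) by auto.
eapply Rle_trans; [| apply L].
eapply Rle_trans. apply Rmult_le_compat_r; auto. apply (minR_pair z q i j); auto.
lra.
Qed.

Lemma PW2 q : (forall u v, (u < n)%nat -> (v < n)%nat -> u <> v -> dist q (p u) <> dist q (p v)) ->
  Sf p q = Hf p q.
Proof.
intros Dq.
destruct (classic (inQ Q q)) as [HQ|HQ].
2:{ unfold Hf. rewrite ind_F by auto. rewrite Rmult_0_l. unfold Sf. apply sumR_zero. intros i _.
    apply sumR_zero. intros j _. apply Tm_zero. intros [_ Hv]. apply HQ. apply Hv. }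
destruct (two_nearest (fun k => dist q (p k)) n) as [i [j [Hij [Hi [Hj V]]]]]. lia.
assert (HV : inV Q n p i j q) by (apply inV_Vp; auto).
assert (HV' : inV Q n p j i q) by (apply inV_sym; auto).
assert (G : genPair Q n p i j) by (repeat split; auto; exists q; auto).
assert (G' : genPair Q n p j i) by (repeat split; auto; exists q; auto).
assert (U : forall a b, genPair Q n p a b -> inV Q n p a b q -> (a = i /\ b = j) \/ (a = j /\ b = i)).
{ intros a b [Hab [Ha [Hb _]]] Hv. apply (generic_unique (fun k => dist q (p k)) n i j a b); auto. all: try exact Dq.
  all: apply inV_Vp in Hv; destruct Hv as [_ Hv]; exact Hv. }
unfold Sf.
rewrite (sumR_two (seq 0 n) _ i j); try apply seq_NoDup; try (apply in_seq; lia); auto.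
- rewrite (sumR_one (seq 0 n) _ j); try apply seq_NoDup; try (apply in_seq; lia).
  rewrite (sumR_one (seq 0 n) _ i); try apply seq_NoDup; try (apply in_seq; lia).
  + rewrite !Tm_val by auto. unfold Hf. rewrite ind_T by auto.
    assert (Em : minR (map (fun ab => / 2 * ((dist q (p (fst ab)))^2 + (dist q (p (snd ab)))^2)) (pairs n))
               = / 2 * (dist q (p i) ^ 2 + dist q (p j) ^ 2)).
    { apply Rle_antisym. apply minR_pair; auto.
      apply minR_ge.
      - intros E. assert (In (0%nat,1%nat) (pairs n)) by (apply in_pairs; lia).
        apply (in_map (fun ab => / 2 * ((dist q (p (fst ab)))^2 + (dist q (p (snd ab)))^2))) in H. rewrite E in H. contradiction.
      - intros x Hx2. apply in_map_iff in Hx2. destruct Hx2 as [[a b] [Ex Hab]]. subst x. apply in_pairs in Hab. simpl.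
        assert (dist q (p i) ^ 2 + dist q (p j) ^ 2 <= dist q (p a) ^ 2 + dist q (p b) ^ 2).
        { apply (cost_min (fun k => dist q (p k)) n); auto. intros; apply dist_nonneg. lia. lia. lia. }
        lra. }
    rewrite Em. field.
  + intros b _ Hb. apply Tm_zero. intros [Ga Hva]. destruct (U j b Ga Hva) as [[E1 E2]|[E1 E2]]; lia.
  + intros b _ Hb. apply Tm_zero. intros [Ga Hva]. destruct (U i b Ga Hva) as [[E1 E2]|[E1 E2]]; lia.
- intros a _ Ha Hb. apply sumR_zero. intros b _. apply Tm_zero. intros [Ga Hva].
  destruct (U a b Ga Hva) as [[E1 E2]|[E1 E2]]; lia.
Qed.

End Main.

Definition cab (p : nat -> pt) u v := fst (p v) ^ 2 + snd (p v) ^ 2 - (fst (p u) ^ 2 + snd (p u) ^ 2).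
Definition badX n (p : nat -> pt) := map (fun uv => cab p (fst uv) (snd uv) / (2 * (fst (p (snd uv)) - fst (p (fst uv)))))
  (list_prod (seq 0 n) (seq 0 n)).
Definition badY n (p : nat -> pt) x := map (fun uv => (cab p (fst uv) (snd uv) - 2 * (fst (p (snd uv)) - fst (p (fst uv))) * x)
  / (2 * (snd (p (snd uv)) - snd (p (fst uv))))) (list_prod (seq 0 n) (seq 0 n)).

Lemma generic_of_bad n p x y :
  (forall i j, (i < n)%nat -> (j < n)%nat -> i <> j -> p i <> p j) ->
  ~ In x (badX n p) -> ~ In y (badY n p x) ->
  forall u v, (u < n)%nat -> (v < n)%nat -> u <> v -> dist (x,y) (p u) <> dist (x,y) (p v).
Proof.
intros Hd HX HY u v Hu Hv Huv Heq.
assert (L1 := proj2 (hp_iff (x,y) (p u) (p v)) (Req_le _ _ Heq)).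
assert (L2 := proj2 (hp_iff (x,y) (p v) (p u)) (Req_le _ _ (eq_sym Heq))).
simpl in L1, L2.
assert (E : 2 * (fst (p v) - fst (p u)) * x + 2 * (snd (p v) - snd (p u)) * y = cab p u v) by (unfold cab; lra).
assert (Inp : In (u,v) (list_prod (seq 0 n) (seq 0 n))) by (apply in_prod; apply in_seq; lia).
destruct (Req_dec (snd (p v) - snd (p u)) 0) as [Hs|Hs].
- assert (Hf : fst (p v) - fst (p u) <> 0).
  { intros Hf. apply (Hd u v); auto. destruct (p u) as [a1 a2], (p v) as [b1 b2]. simpl in *. f_equal; lra. }
  apply HX. apply in_map_iff. exists (u,v). split; auto. simpl.
  rewrite Hs in E. field_simplify_eq; [|lra]. lra.
- apply HY. apply in_map_iff. exists (u,v). split; auto. simpl.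
  field_simplify_eq; [|lra]. lra.
Qed.

Theorem mainTheorem6
  (Q : list (R * R * R)) (x0 x1 y0 y1 : R) (phi : pt -> R) (n : nat) (p : nat -> pt)
  (HQbox : forall q, inQ Q q -> inBox x0 x1 y0 y1 q)
  (Hphi : C2_2 phi)
  (Hphi_nonneg : forall q, inQ Q q -> 0 <= phi q)
  (Hn : (3 <= n)%nat)
  (HpQ : forall i, (i < n)%nat -> inQ Q (p i))
  (Hdistinct : forall i j, (i < n)%nat -> (j < n)%nat -> i <> j -> p i <> p j)
  (HMW : forall i, (i < n)%nat -> 0 < MW x0 x1 y0 y1 Q phi n p i) :
  let p' := fun i => CW x0 x1 y0 y1 Q phi n p i in
  Hcost x0 x1 y0 y1 Q phi n p' <= Hcost x0 x1 y0 y1 Q phi n p /\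
  ((exists i, (i < n)%nat /\ p i <> p' i) ->
     Hcost x0 x1 y0 y1 Q phi n p' < Hcost x0 x1 y0 y1 Q phi n p).
Proof.
intros p'.
assert (Hxy : x0 <= x1 /\ y0 <= y1).
{ destruct (HQbox (p 0%nat) (HpQ 0%nat ltac:(lia))) as [[a b] [c d]]. lra. }
destruct Hxy as [Hx Hy].
assert (Cphi := C2_cont phi Hphi).
assert (E1 : Hcost x0 x1 y0 y1 Q phi n p' = Int2 x0 x1 y0 y1 (Hf Q phi n p')) by reflexivity.
assert (E2 : Hcost x0 x1 y0 y1 Q phi n p = Int2 x0 x1 y0 y1 (Hf Q phi n p)) by reflexivity.
assert (A1 : Int2 x0 x1 y0 y1 (Hf Q phi n p') <= Int2 x0 x1 y0 y1 (Sf Q phi n p p')).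
{ apply Int2_le; auto. apply Good_Hf; auto. apply Good_Sf; auto. intros q. apply PW1; auto. }
assert (A2 : Int2 x0 x1 y0 y1 (Sf Q phi n p p) = Int2 x0 x1 y0 y1 (Hf Q phi n p)).
{ destruct (Good_scal x0 x1 y0 y1 (-1) _ (Good_Hf Q x0 x1 y0 y1 phi n Cphi Hx Hy p)) as [G1 I1].
  destruct (Good_plus x0 x1 y0 y1 _ _ (proj1 (Good_Sf Q x0 x1 y0 y1 phi n p Cphi Hx Hy p)) G1) as [G2 I2].
  assert (Z : Int2 x0 x1 y0 y1 (fun q => Sf Q phi n p p q + -1 * Hf Q phi n p q) = 0).
  { apply (Int2_zero x0 x1 y0 y1 _ (badX n p) (badY n p)); auto.
    intros x y _ _ HX HY. rewrite PW2; auto. ring. apply generic_of_bad; auto. }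
  rewrite I2, I1 in Z. lra. }
assert (A3 : Int2 x0 x1 y0 y1 (Sf Q phi n p p) - Int2 x0 x1 y0 y1 (Sf Q phi n p p') =
  sumR (map (fun i => /2 * MW x0 x1 y0 y1 Q phi n p i * ((fst (p i) - fst (p' i)) ^ 2 + (snd (p i) - snd (p' i)) ^ 2)) (seq 0 n))).
{ rewrite !Int2_Sf; auto. rewrite sumR_minus. apply sumR_ext. intros i Hi. apply in_seq in Hi.
  unfold p'. apply Tdiff. apply HMW; lia. }
assert (Nn : forall i, In i (seq 0 n) -> 0 <= /2 * MW x0 x1 y0 y1 Q phi n p i * ((fst (p i) - fst (p' i)) ^ 2 + (snd (p i) - snd (p' i)) ^ 2)).
{ intros i Hi. apply in_seq in Hi. assert (0 < MW x0 x1 y0 y1 Q phi n p i) by (apply HMW; lia).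
  assert (0 <= (fst (p i) - fst (p' i)) ^ 2) by apply pow2_ge_0.
  assert (0 <= (snd (p i) - snd (p' i)) ^ 2) by apply pow2_ge_0.
  apply Rmult_le_pos; [|lra]. apply Rmult_le_pos; lra. }
assert (A4 := sumR_nonneg _ _ Nn).
rewrite E1, E2. split.
- lra.
- intros [i [Hi Hne]].
  assert (Pos : 0 < sumR (map (fun i => /2 * MW x0 x1 y0 y1 Q phi n p i * ((fst (p i) - fst (p' i)) ^ 2 + (snd (p i) - snd (p' i)) ^ 2)) (seq 0 n))).
  { apply (sumR_pos _ _ i); auto. apply in_seq; lia.
    assert (0 < MW x0 x1 y0 y1 Q phi n p i) by (apply HMW; lia).
    assert (0 <= (fst (p i) - fst (p' i)) ^ 2) by apply pow2_ge_0.
    assert (0 <= (snd (p i) - snd (p' i)) ^ 2) by apply pow2_ge_0.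
    assert (0 < (fst (p i) - fst (p' i)) ^ 2 + (snd (p i) - snd (p' i)) ^ 2).
    { destruct (Req_dec (fst (p i) - fst (p' i)) 0) as [K1|K1].
      - destruct (Req_dec (snd (p i) - snd (p' i)) 0) as [K2|K2].
        + exfalso. apply Hne. destruct (p i) as [a b], (p' i) as [c d]. simpl in *. f_equal; lra.
        + assert (0 < (snd (p i) - snd (p' i)) ^ 2) by (apply pow2_gt_0; auto). lra.
      - assert (0 < (fst (p i) - fst (p' i)) ^ 2) by (apply pow2_gt_0; auto). lra. }
    apply Rmult_lt_0_compat; [|lra]. apply Rmult_lt_0_compat; lra. }
  lra.
Qed.
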